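(* If $Q$ is a quantity space over a field $K$, then any two bases for $Q$ have the same cardinality.
   Context: A scalable monoid over a (unital, associative) ring $R$ is a monoid $X$ (identity $1_X$, product written $xy$) together with a map $R\times X\to X$, $(\alpha,x)\mapsto\alpha\cdot x$, such that $1\cdot x=x$, $\alpha\cdot(\beta\cdot x)=\alpha\beta\cdot x$ and $\alpha\cdot(xy)=(\alpha\cdot x)y=x(\alpha\cdot y)$. A quantity space over a field $K$ is a commutative scalable monoid $Q$ over $K$ for which there exists a basis, i.e. a finite set $\{e_1,\ldots,e_n\}$ of invertible elements of $Q$ such that every $x\in Q$ has a unique expansion $x=\mu\cdot\prod_{i=1}^n e_i^{k_i}$ with $\mu\in K$ and $k_1,\ldots,k_n\in\mathbb{Z}$. *)

(* Defs.v *)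
From mathcomp Require Import all_boot all_order all_algebra.
Set Implicit Arguments. Unset Strict Implicit. Unset Printing Implicit Defensive.
Import GRing.Theory.
Local Open Scope ring_scope.

Definition is_scalable_monoid (R : pzRingType) (X : Type)
    (one : X) (mul : X -> X -> X) (scale : R -> X -> X) : Prop :=
  (forall x y z, mul x (mul y z) = mul (mul x y) z) /\
  (forall x, mul one x = x) /\
  (forall x, mul x one = x) /\
  (forall x, scale 1 x = x) /\
  (forall a b x, scale a (scale b x) = scale (a * b) x) /\
  (forall a x y, scale a (mul x y) = mul (scale a x) y
                 /\ scale a (mul x y) = mul x (scale a y)).

Definition zpow (X : Type) (one : X) (mul : X -> X -> X) (x xinv : X) (k : int) : X :=
  match k with
  | Posz n => iter n (mul x) one
  | Negz n => iter n.+1 (mul xinv) one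
  end.

Definition zprod (X : Type) (one : X) (mul : X -> X -> X) (n : nat)
    (e einv : 'I_n -> X) (k : 'I_n -> int) : X :=
  foldr (fun i acc => mul (zpow one mul (e i) (einv i) (k i)) acc) one (enum 'I_n).

Definition is_basis (K : fieldType) (X : Type)
    (one : X) (mul : X -> X -> X) (scale : K -> X -> X)
    (n : nat) (e : 'I_n -> X) : Prop :=
  injective e /\
  exists einv : 'I_n -> X,
    (forall i, mul (e i) (einv i) = one /\ mul (einv i) (e i) = one) /\
    forall x : X,
      (exists (mu : K) (k : 'I_n -> int), x = scale mu (zprod one mul e einv k)) /\
      (forall (mu mu' : K) (k k' : 'I_n -> int),
          x = scale mu (zprod one mul e einv k) ->
          x = scale mu' (zprod one mul e einv k') ->
          mu = mu' /\ (forall i, k i = k' i)).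

Definition is_quantity_space (K : fieldType) (X : Type)
    (one : X) (mul : X -> X -> X) (scale : K -> X -> X) : Prop :=
  [/\ is_scalable_monoid one mul scale,
      (forall x y, mul x y = mul y x)
    & exists (n : nat) (e : 'I_n -> X), is_basis one mul scale e].

(* Main.v *)
Require Import Defs.
From mathcomp Require Import all_boot all_order all_algebra.
From Stdlib Require Import FunctionalExtensionality ClassicalEpsilon.
From mathcomp Require Import zify.
Set Implicit Arguments. Unset Strict Implicit. Unset Printing Implicit Defensive.
Import GRing.Theory.
Local Open Scope ring_scope.

Section S.
Variables (K : fieldType) (Q : Type) (one : Q) (mul : Q -> Q -> Q) (scale : K -> Q -> Q).
Hypothesis HA : forall x y z, mul x (mul y z) = mul (mul x y) z.
Hypothesis H1l : forall x, mul one x = x.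
Hypothesis H1r : forall x, mul x one = x.
Hypothesis HC : forall x y, mul x y = mul y x.
Hypothesis Hs1 : forall x, scale 1 x = x.
Hypothesis HsM : forall a b x, scale a (scale b x) = scale (a * b) x.
Hypothesis Hsl : forall a x y, scale a (mul x y) = mul (scale a x) y.

Lemma swap4 a b c d : mul (mul a b) (mul c d) = mul (mul a c) (mul b d).
Proof. by rewrite -!HA (HA b c) (HC b c) -HA. Qed.

Lemma scale_mul a b x y : mul (scale a x) (scale b y) = scale (a * b) (mul x y).
Proof. by rewrite -Hsl HC -Hsl HsM mulrC HC. Qed.

Section Zpow.
Variables (x xi : Q).
Hypothesis Hx : mul x xi = one.

Let zp := zpow one mul x xi.

Lemma zpowS a : zp (a + 1) = mul x (zp a).
Proof.
case: a => [n|[|n]].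
- have -> : Posz n + 1 = Posz n.+1 by rewrite -addn1 PoszD.
  by [].
- by rewrite /zp /= H1r Hx.
- have -> : Negz n.+1 + 1 = Negz n.
    by rewrite !NegzE; apply/eqP; rewrite -subr_eq0; apply/eqP; rewrite /=; lia.
  by rewrite /zp /= HA Hx H1l.
Qed.

Lemma zpowB a : zp (a - 1) = mul xi (zp a).
Proof.
case: a => [[|n]|n].
- by rewrite /zp /= H1r.
- have -> : Posz n.+1 - 1 = Posz n by rewrite -addn1 PoszD addrK.
  by rewrite /zp /= HA (HC xi x) Hx H1l.
- have -> : Negz n - 1 = Negz n.+1.
    by rewrite !NegzE; apply/eqP; rewrite -subr_eq0; apply/eqP; lia.
  by [].
Qed.

Lemma comm_gen a y : mul a (mul xi y) = mul xi (mul a y).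
Proof. by rewrite HA (HC a xi) -HA. Qed.
Lemma comm_gen' a y : mul a (mul x y) = mul x (mul a y).
Proof. by rewrite HA (HC a x) -HA. Qed.

Lemma zpowD a b : mul (zp a) (zp b) = zp (a + b).
Proof.
case: b => n; elim: n => [|n IH].
- by rewrite /zp /= H1r addr0.
- have -> : Posz n.+1 = Posz n + 1 by rewrite -addn1 PoszD.
  by rewrite zpowS comm_gen' IH addrA zpowS.
- have -> : Negz 0 = 0 - 1 by [].
  by rewrite zpowB comm_gen /zp /= H1r addrA -/zp zpowB addr0.
- have -> : Negz n.+1 = Negz n - 1.
    by rewrite !NegzE; apply/eqP; rewrite -subr_eq0; apply/eqP; lia.
  by rewrite zpowB comm_gen IH addrA zpowB.
Qed.
End Zpow.

Section Basis.
Variables (n : nat) (e einv : 'I_n -> Q).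
Hypothesis Hinv : forall i, mul (e i) (einv i) = one.

Definition F (s : seq 'I_n) (k : 'I_n -> int) :=
  foldr (fun i acc => mul (zpow one mul (e i) (einv i) (k i)) acc) one s.

Lemma FD s k l : mul (F s k) (F s l) = F s (fun i => k i + l i).
Proof.
elim: s => [|i s IH] /=; first by rewrite H1r.
by rewrite swap4 IH zpowD.
Qed.

Lemma F0 s : F s (fun _ => 0) = one.
Proof. by elim: s => [|i s IH] //=; rewrite IH H1r. Qed.

Lemma Fdelta s i : uniq s -> F s (fun j => (j == i)%:Z) = if i \in s then e i else one.
Proof.
elim: s => [|j s IH] //= /andP[js us]; rewrite IH // in_cons.
case: (eqVneq j i) => [<-|ji] /=.
  by rewrite (negbTE js) /= !H1r.
by rewrite H1l.
Qed.

Definition rep x mu k := x = scale mu (F (enum 'I_n) k).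

Lemma repM x y mu nu k l : rep x mu k -> rep y nu l ->
  rep (mul x y) (mu * nu) (fun i => k i + l i).
Proof. by rewrite /rep => -> ->; rewrite scale_mul FD. Qed.

Lemma rep1 : rep one 1 (fun _ => 0).
Proof. by rewrite /rep Hs1 F0. Qed.

Lemma rep_e i : rep (e i) 1 (fun j => (j == i)%:Z).
Proof. by rewrite /rep Hs1 Fdelta ?enum_uniq // mem_enum. Qed.

Lemma repZ a x mu k : rep x mu k -> rep (scale a x) (a * mu) k.
Proof. by rewrite /rep => ->; rewrite HsM. Qed.
End Basis.

Section Cross.
Variables (n m : nat) (e einv : 'I_n -> Q) (f finv : 'I_m -> Q).
Hypothesis Hinve : forall i, mul (e i) (einv i) = one.
Hypothesis Hinvf : forall j, mul (f j) (finv j) = one.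
Hypothesis Hex : forall x, exists mu k, rep e einv x mu k.
Hypothesis Huniq : forall x mu mu' k k', rep e einv x mu k -> rep e einv x mu' k' ->
   forall i, k i = k' i.
Variables (a : 'I_m -> K) (A : 'I_m -> 'I_n -> int).
Hypothesis HA_ : forall j, rep e einv (f j) (a j) (A j).

Lemma rep_iter y c Y : rep e einv y c Y -> forall k : nat,
  exists d, rep e einv (iter k (mul y) one) d (fun i => k%:Z * Y i).
Proof.
move=> Hy; elim=> [|k [d Hd]].
  exists 1; rewrite /=.
  have -> : (fun i => (0%N)%:Z * Y i) = (fun _ => 0) by apply: functional_extensionality => i; rewrite mul0r.
  exact: rep1.
exists (c * d); rewrite /=.
have -> : (fun i => (k.+1)%:Z * Y i) = (fun i => Y i + k%:Z * Y i).
  by apply: functional_extensionality => i; rewrite -addn1 PoszD mulrDl mul1r addrC.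
exact: (repM Hinve).
Qed.

Lemma rep_finv j : exists c, rep e einv (finv j) c (fun i => - A j i).
Proof.
have [c [C HC']] := Hex (finv j).
have H := repM Hinve (HA_ j) HC'; rewrite Hinvf in H.
have E := Huniq H (rep1 e einv).
exists c.
have -> : (fun i => - A j i) = C; last by [].
apply: functional_extensionality => i.
by have := E i; rewrite /= addrC => /eqP; rewrite addr_eq0 => /eqP ->.
Qed.

Lemma rep_zpow j z : exists c,
  rep e einv (zpow one mul (f j) (finv j) z) c (fun i => z * A j i).
Proof.
case: z => k /=.
  exact: rep_iter (HA_ j) k.
have [c Hc] := rep_finv j.
have [d Hd] := rep_iter Hc k.+1.
exists d.
have -> : (fun i => Negz k * A j i) = (fun i => (k.+1)%:Z * - A j i); last by [].
apply: functional_extensionality => i.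
by rewrite NegzE mulrN mulNr.
Qed.

Lemma rep_F s (B : 'I_m -> int) : exists c,
  rep e einv (F f finv s B) c (fun i => \sum_(j <- s) B j * A j i).
Proof.
elim: s => [|j s [c Hc]] /=.
  exists 1.
  have -> : (fun i => \sum_(j <- [::]) B j * A j i) = (fun _ => 0).
    by apply: functional_extensionality => i; rewrite big_nil.
  exact: rep1.
have [d Hd] := rep_zpow j (B j).
exists (d * c).
have -> : (fun i => \sum_(j0 <- j :: s) B j0 * A j0 i) =
          (fun i => B j * A j i + \sum_(j0 <- s) B j0 * A j0 i).
  by apply: functional_extensionality => i; rewrite big_cons.
exact: (repM Hinve).
Qed.

Lemma cross (b : 'I_n -> K) (B : 'I_n -> 'I_m -> int) :
  (forall i, rep f finv (e i) (b i) (B i)) ->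
  forall i i', \sum_(j < m) B i j * A j i' = (i' == i)%:Z.
Proof.
move=> HB i i'.
have [c Hc] := rep_F (enum 'I_m) (B i).
have H1 : rep e einv (e i) (b i * c) (fun i0 => \sum_(j <- enum 'I_m) B i j * A j i0).
  by rewrite (HB i); apply: repZ.
have := Huniq H1 (rep_e e einv i) i'.
by rewrite /= big_enum.
Qed.
End Cross.
End S.

Lemma rank_arg n m (A : 'M[int]_(m,n)) (B : 'M[int]_(n,m)) : B *m A = 1%:M -> (n <= m)%N.
Proof.
move=> H.
have H' : (map_mx (intr : int -> rat) B) *m (map_mx intr A) = 1%:M.
  by rewrite -map_mxM H map_mx1.
have := mxrankM_maxr (map_mx (intr : int -> rat) B) (map_mx intr A).
rewrite H' mxrank1 => /leq_trans; apply; exact: rank_leq_row.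
Qed.

Lemma bases_le (K : fieldType) (Q : Type)
    (one : Q) (mul : Q -> Q -> Q) (scale : K -> Q -> Q) :
  is_quantity_space one mul scale ->
  forall (n m : nat) (e : 'I_n -> Q) (f : 'I_m -> Q),
    is_basis one mul scale e -> is_basis one mul scale f -> (n <= m)%N.
Proof.
move=> [[HA' [H1l' [H1r' [Hs1' [HsM' Hsl']]]]] HC' _] n m e f
  [_ [einv [Hie Hue]]] [_ [finv [Hif Huf]]].
have Hsl := fun a x y => (Hsl' a x y).1.
have Hexe : forall x, exists mu k, rep one mul scale e einv x mu k.
  by move=> x; exact: (Hue x).1.
have Hexf : forall x, exists mu k, rep one mul scale f finv x mu k.
  by move=> x; exact: (Huf x).1.
have Hune : forall x mu mu' k k', rep one mul scale e einv x mu k ->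
    rep one mul scale e einv x mu' k' -> forall i, k i = k' i.
  by move=> x mu mu' k k' H1 H2; exact: ((Hue x).2 mu mu' k k' H1 H2).2.
have cA : forall j, {k | exists mu, rep one mul scale e einv (f j) mu k}.
  move=> j; apply: constructive_indefinite_description.
  by have [mu [k H]] := Hexe (f j); exists k, mu.
have cB : forall i, {k | exists mu, rep one mul scale f finv (e i) mu k}.
  move=> i; apply: constructive_indefinite_description.
  by have [mu [k H]] := Hexf (e i); exists k, mu.
pose A j := sval (cA j).
pose B i := sval (cB i).
have ca : forall j, {mu | rep one mul scale e einv (f j) mu (A j)}.
  move=> j; apply: constructive_indefinite_description; exact: (svalP (cA j)).
have cb : forall i, {mu | rep one mul scale f finv (e i) mu (B i)}.
  move=> i; apply: constructive_indefinite_description; exact: (svalP (cB i)).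
have HAj : forall j, rep one mul scale e einv (f j) (sval (ca j)) (A j).
  by move=> j; exact: svalP (ca j).
have HBi : forall i, rep one mul scale f finv (e i) (sval (cb i)) (B i).
  by move=> i; exact: svalP (cb i).
have Hc := cross HA' H1l' H1r' HC' Hs1' HsM' Hsl (fun i => (Hie i).1) (fun j => (Hif j).1)
  Hexe Hune HAj HBi.
apply: (@rank_arg n m (\matrix_(j, i) A j i) (\matrix_(i, j) B i j)).
apply/matrixP => i i'; rewrite !mxE.
under eq_bigr do rewrite !mxE.
rewrite Hc.
by rewrite eq_sym; case: (i == i').
Qed.

Theorem proposition3p21 (K : fieldType) (Q : Type)
    (one : Q) (mul : Q -> Q -> Q) (scale : K -> Q -> Q) :
  is_quantity_space one mul scale ->
  forall (n m : nat) (e : 'I_n -> Q) (f : 'I_m -> Q),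
    is_basis one mul scale e -> is_basis one mul scale f -> n = m.
Proof.
move=> HQ n m e f He Hf; apply/anti_leq/andP; split.
  exact: bases_le HQ n m e f He Hf.
exact: bases_le HQ m n f e Hf He.
Qed.
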